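(* Let $0<\lambda_1\le\lambda_2\le1$ and let $K_1,K_2:\mathbb{R}_+\to\mathbb{R}$ be two functions. Define \[ I:=\sup_{\varphi_1,\varphi_2}\int_0^\infty\big(\varphi_1(t)K_1(t)+\varphi_2(t)K_2(t)\big)\,\mathrm{d}t, \] the supremum over all functions $\varphi_i:\mathbb{R}_+\to[0,\lambda_i]$ ($i=1,2$) such that $\varphi_1+\varphi_2$ is nondecreasing, and for $0\le a\le b\le c\le\infty$ define \[ I(a,b,c):=\lambda_1\int_a^c\max\{K_1(t),K_2(t)\}\,\mathrm{d}t+\lambda_1\int_c^\infty(K_1(t)+K_2(t))\,\mathrm{d}t+(\lambda_2-\lambda_1)\int_b^\infty K_2(t)\,\mathrm{d}t . \] Then $I=\sup_{0\le a\le b\le c\le\infty}I(a,b,c)$.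
   Context: All functions are Borel measurable. *)

(* Defs.v *)
From HB Require Import structures.
From mathcomp Require Import all_boot all_order all_algebra.
From mathcomp Require Import all_classical all_reals all_analysis.
Set Implicit Arguments. Unset Strict Implicit. Unset Printing Implicit Defensive.
Import Order.TTheory GRing.Theory Num.Theory.
Local Open Scope classical_set_scope.
Local Open Scope ring_scope.
Local Open Scope ereal_scope.

Definition Rnonneg (R : realType) : set R := [set t : R | (0 <= t)%R].

Definition eitv_co (R : realType) (a c : \bar R) : set R :=
  [set t : R | a <= t%:E /\ t%:E < c].
Definition eitv_inf (R : realType) (c : \bar R) : set R :=
  [set t : R | c <= t%:E].

Definition Jfun (R : realType) (K1 K2 phi1 phi2 : R -> R) : \bar R :=
  \int[lebesgue_measure]_(t in @Rnonneg R)
     ((phi1 t * K1 t + phi2 t * K2 t)%R)%:E.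

Definition admissible (R : realType) (l1 l2 : R) (phi1 phi2 : R -> R) : Prop :=
  [/\ measurable_fun (@Rnonneg R) phi1, measurable_fun (@Rnonneg R) phi2,
      (forall t, (0 <= t)%R -> (0 <= phi1 t <= l1)%R /\ (0 <= phi2 t <= l2)%R)
    & (forall s t, (0 <= s)%R -> (s <= t)%R ->
         (phi1 s + phi2 s <= phi1 t + phi2 t)%R)].

Definition Isup (R : realType) (l1 l2 : R) (K1 K2 : R -> R) : \bar R :=
  ereal_sup [set x | exists phi1 phi2 : R -> R,
     admissible l1 l2 phi1 phi2 /\ x = Jfun K1 K2 phi1 phi2].

Definition Iabc (R : realType) (l1 l2 : R) (K1 K2 : R -> R) (a b c : \bar R)
  : \bar R :=
  l1%:E * (\int[lebesgue_measure]_(t in eitv_co a c) (Num.max (K1 t) (K2 t))%:E)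
  + l1%:E * (\int[lebesgue_measure]_(t in eitv_inf c) ((K1 t + K2 t)%R)%:E)
  + (l2 - l1)%:E * (\int[lebesgue_measure]_(t in eitv_inf b) (K2 t)%:E).

Definition Iabc_sup (R : realType) (l1 l2 : R) (K1 K2 : R -> R) : \bar R :=
  ereal_sup [set x | exists a b c : \bar R,
     [/\ 0 <= a, a <= b, b <= c & x = Iabc l1 l2 K1 K2 a b c]].

(* Main.v *)
Require Import Defs.
From HB Require Import structures.
From mathcomp Require Import all_boot all_order all_algebra.
From mathcomp Require Import all_classical all_reals all_analysis.
From mathcomp.algebra_tactics Require Import ring lra.
Import Order.TTheory GRing.Theory Num.Theory.
Local Open Scope classical_set_scope.
Local Open Scope ring_scope.

Module Aux.
Set Implicit Arguments. Unset Strict Implicit. Unset Printing Implicit Defensive.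

Section Helpers.
Context {R : realType}.
Local Notation mu := (@lebesgue_measure R).
Local Notation D0 := (@Rnonneg R).
Local Notation mR := (measurableTypeR R).

Lemma D0E : D0 = `[0%R, +oo[%classic.
Proof. by apply/seteqP; split => t /=; rewrite in_itv /= andbT. Qed.

Lemma mD0 : measurable (D0 : set mR).
Proof. by rewrite D0E; exact: measurable_itv. Qed.

Lemma meitv_inf (x : \bar R) : measurable (eitv_inf x : set mR).
Proof.
case: x => [r| |].
- have -> : eitv_inf r%:E = `[r, +oo[%classic.
    by apply/seteqP; split => t /=; rewrite ?in_itv /= ?andbT ?lee_fin.
  exact: measurable_itv.
- have -> : eitv_inf (+oo%E : \bar R) = set0.
    by apply/seteqP; split => t //=; rewrite leNgt ltey.
  exact: measurable0.
- have -> : eitv_inf (-oo%E : \bar R) = setT.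
    by apply/seteqP; split => t //= _; exact: leNye.
  exact: measurableT.
Qed.

Lemma eitv_coE (a c : \bar R) : eitv_co a c = eitv_inf a `\` eitv_inf c.
Proof.
apply/seteqP; split => t /=; rewrite /eitv_co /eitv_inf /=.
  by move=> [-> /= ]; rewrite ltNge => /negP.
by move=> [-> /negP]; rewrite -ltNge.
Qed.

Lemma eitv_inf_sub (x : \bar R) : (0 <= x)%E -> eitv_inf x `<=` D0.
Proof. by move=> x0 t /= xt; rewrite /Rnonneg /= -lee_fin; exact: le_trans x0 xt. Qed.

Lemma eitv_inf_le (x y : \bar R) : (x <= y)%E -> eitv_inf y `<=` eitv_inf x.
Proof. by move=> xy t /= yt; exact: le_trans xy yt. Qed.

Definition RI (D : set R) (f : R -> R) := Rintegral mu D f.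

Definition intg (D : set R) (f : R -> R) := mu.-integrable D (EFin \o f).

Lemma intgS D E f : measurable (E : set mR) -> E `<=` D -> intg D f -> measurable (D : set mR) -> intg E f.
Proof. by move=> mE ED fi mD; exact: integrableS fi. Qed.

Lemma RIE D f : measurable (D : set mR) -> intg D f ->
  (\int[mu]_(t in D) (f t)%:E)%E = (RI D f)%:E.
Proof. by move=> mD fi; rewrite /RI /Rintegral fineK; last exact: integrable_fin_num. Qed.

Lemma intg_ind (U : set R) f : measurable (U : set mR) -> intg D0 f ->
  intg D0 (fun t => \1_U t * f t).
Proof.
move=> mU fi; rewrite /intg.
have : mu.-integrable D0 ((EFin \o f) \_ U).
  apply/integrable_restrict => //; first exact: mD0.
  by apply: integrableS fi => //; [exact: mD0|exact: measurableI mD0 mU].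
apply: (eq_integrable mD0) => t _ /=; rewrite /patch /= indicE.
by case: ifPn => _; rewrite ?mul1r ?mul0r.
Qed.

Lemma RI_ind (U : set R) f : measurable (U : set mR) -> U `<=` D0 ->
  RI D0 (fun t => \1_U t * f t) = RI U f.
Proof.
move=> mU UD; rewrite /RI -[in RHS](setIidr UD) Rintegral_mkcondr.
apply: eq_Rintegral => t _; rewrite /patch indicE.
by case: ifPn => _; rewrite ?mul1r ?mul0r.
Qed.

Lemma intgD D f g : measurable (D : set mR) -> intg D f -> intg D g -> intg D (fun t => f t + g t).
Proof. by move=> mD fi gi; exact: (integrableD mD fi gi). Qed.

Lemma intgZ D k f : measurable (D : set mR) -> intg D f -> intg D (fun t => k * f t).
Proof.
move=> mD fi; rewrite /intg; have := integrableZl mD k fi.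
by apply: (eq_integrable mD) => t _.
Qed.

End Helpers.


Section P1.
Context {R : realType}.
Local Notation mu := (@lebesgue_measure R).
Local Notation D0 := (@Rnonneg R).
Local Notation mR := (measurableTypeR R).
Variables (K1 K2 : R -> R).
Hypotheses (hK1 : intg D0 K1) (hK2 : intg D0 K2).

Definition c1 t := Num.max (K1 t) (K2 t).
Definition c3 t := Num.min (K1 t) (K2 t).

Lemma mK1 : measurable_fun (D0 : set mR) K1.
Proof. have := measurable_int mu hK1. move/measurable_realfun.measurable_EFinP. by []. Qed.
Lemma mK2 : measurable_fun (D0 : set mR) K2.
Proof. have := measurable_int mu hK2. move/measurable_realfun.measurable_EFinP. by []. Qed.

Lemma intg_abs f : intg D0 f -> intg D0 (fun t => `|f t|).
Proof. by move=> fi; have := integrable_norm fi. Qed.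

Lemma maxnorm (a b : R) : `|Num.max a b| <= `|a| + `|b| /\ `|Num.min a b| <= `|a| + `|b|.
Proof.
have h1 := normr_ge0 a; have h2 := normr_ge0 b.
by rewrite /Num.max /Num.min; case: ifP => _; split; lra.
Qed.

Lemma hc1 : intg D0 c1.
Proof.
apply: (le_integrable mD0 (g := EFin \o (fun t => `|K1 t| + `|K2 t|))).
- apply/measurable_realfun.measurable_EFinP; apply: measurable_realfun.measurable_maxr; [exact: mK1|exact: mK2].
- move=> t _ /=; rewrite !lee_fin /c1 [X in _ <= X]ger0_norm ?addr_ge0 //.
  exact: (maxnorm _ _).1.
- exact: (intgD mD0 (intg_abs hK1) (intg_abs hK2)).
Qed.

Lemma hc3 : intg D0 c3.
Proof.
apply: (le_integrable mD0 (g := EFin \o (fun t => `|K1 t| + `|K2 t|))).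
- apply/measurable_realfun.measurable_EFinP; apply: measurable_realfun.measurable_minr; [exact: mK1|exact: mK2].
- move=> t _ /=; rewrite !lee_fin /c3 [X in _ <= X]ger0_norm ?addr_ge0 //.
  exact: (maxnorm _ _).2.
- exact: (intgD mD0 (intg_abs hK1) (intg_abs hK2)).
Qed.

Lemma c13 t : K1 t + K2 t = c1 t + c3 t.
Proof. by rewrite /c1 /c3 [in RHS]addrC addr_min_max. Qed.

Lemma Iabc_alt (l1 l2 : R) (a b c : \bar R) : (0 <= a)%E -> (0 <= b)%E -> (a <= c)%E ->
  Iabc l1 l2 K1 K2 a b c =
  (l1 * RI (eitv_inf a) c1 + l1 * RI (eitv_inf c) c3 + (l2 - l1) * RI (eitv_inf b) K2)%:E.
Proof.
move=> a0 b0 ac.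
set A := eitv_inf a; set B := eitv_inf b; set C := eitv_inf c.
have mA : measurable (A : set mR) by exact: meitv_inf.
have mB : measurable (B : set mR) by exact: meitv_inf.
have mC : measurable (C : set mR) by exact: meitv_inf.
have AD : A `<=` D0 by exact: eitv_inf_sub.
have BD : B `<=` D0 by exact: eitv_inf_sub.
have CD : C `<=` D0 by apply: eitv_inf_sub; exact: le_trans ac.
have CA : C `<=` A by exact: eitv_inf_le.
have mAC : measurable (A `\` C : set mR) by exact: measurableD.
have ACD : A `\` C `<=` D0 by move=> t [/AD].
rewrite /Iabc eitv_coE -/A -/C -/B.
rewrite (RIE mAC); last by apply: intgS mAC ACD hc1 mD0.
rewrite (RIE mC); last by apply: intgS mC CD (intgD mD0 hK1 hK2) mD0.
rewrite (RIE mB); last by apply: intgS mB BD hK2 mD0.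
have -> : RI C (fun t => K1 t + K2 t) = RI C c1 + RI C c3.
  rewrite /RI -RintegralD //; last by apply: intgS mC CD hc3 mD0.
    by apply: eq_Rintegral => t _; rewrite c13.
  by apply: intgS mC CD hc1 mD0.
have -> : RI A c1 = RI (A `\` C) c1 + RI C c1.
  rewrite /RI -Rintegral_setU //.
  - by rewrite setUC setDUK.
  - by rewrite setUC setDUK //; apply: intgS mA AD hc1 mD0.
  - by apply/disj_setPS; rewrite setDKI.
rewrite -!EFinM -!EFinD; congr EFin; ring.
Qed.

End P1.


Ltac mtac := repeat first [ apply: measurable_realfun.measurable_funM
  | apply: measurable_realfun.measurable_funD | apply: measurable_realfun.measurable_funB
  | apply: measurable_realfun.measurable_funN | apply: measurable_realfun.measurable_indic | assumption | exact: measurable_cst ].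

Section P2.
Context {R : realType}.
Local Notation mu := (@lebesgue_measure R).
Local Notation D0 := (@Rnonneg R).
Local Notation mR := (measurableTypeR R).
Variables (K1 K2 : R -> R).
Hypotheses (hK1 : intg D0 K1) (hK2 : intg D0 K2).

Lemma ind01 (X : set R) t : 0 <= (\1_X t : R) <= 1.
Proof. by rewrite indicE; case: (t \in X) => /=; rewrite ?lexx ?ler01. Qed.

Lemma ind_mono (x : \bar R) s t : s <= t -> (\1_(eitv_inf x) s : R) <= \1_(eitv_inf x) t.
Proof.
move=> st; rewrite !indicE; case: (boolP (s \in _)) => [/set_mem hs|_].
  by rewrite mem_set //= ; apply: le_trans hs _; rewrite lee_fin.
by case: (t \in _) => /=; rewrite ?ler01.
Qed.

Lemma ind_cases (X : set R) t : (\1_X t : R) = 0 \/ (\1_X t : R) = 1.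
Proof. by rewrite indicE; case: (t \in X); [right|left]. Qed.

Let Pset := D0 `&` ((fun t => K2 t <= K1 t) @^-1` [set true]).

Lemma mPset : measurable (Pset : set mR).
Proof.
apply: (measurable_realfun.measurable_fun_ler (mK2 hK2) (mK1 hK1)) => //.
exact: mD0.
Qed.

Lemma ge_dir (l1 l2 : R) (hl1 : 0 < l1) (hl12 : l1 <= l2) (a b c : \bar R) : (0 <= a)%E -> (a <= b)%E -> (b <= c)%E ->
  (Iabc l1 l2 K1 K2 a b c <= Isup l1 l2 K1 K2)%E.
Proof.
move=> a0 ab bc.
have b0 : (0 <= b)%E by exact: le_trans ab.
have ac : (a <= c)%E by exact: le_trans bc.
rewrite (Iabc_alt hK1 hK2) //.
set A := eitv_inf a; set B := eitv_inf b; set C := eitv_inf c.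
have mA : measurable (A : set mR) by exact: meitv_inf.
have mB : measurable (B : set mR) by exact: meitv_inf.
have mC : measurable (C : set mR) by exact: meitv_inf.
have AD : A `<=` D0 by exact: eitv_inf_sub.
have BD : B `<=` D0 by exact: eitv_inf_sub.
have CD : C `<=` D0 by apply: eitv_inf_sub; exact: le_trans ac.
have CB : C `<=` B by exact: eitv_inf_le.
have BA : B `<=` A by exact: eitv_inf_le.
pose p (t : R) : R := \1_Pset t.
pose phi1 (t : R) : R := l1 * (p t * \1_A t + (1 - p t) * \1_C t).
pose phi2 (t : R) : R := l1 * (p t * \1_C t + (1 - p t) * \1_A t) + (l2 - l1) * \1_B t.
pose g (t : R) : R := l1 * (\1_A t * c1 K1 K2 t) + l1 * (\1_C t * c3 K1 K2 t)
            + (l2 - l1) * (\1_B t * K2 t).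
have phig t : D0 t -> phi1 t * K1 t + phi2 t * K2 t = g t.
  move=> t0; rewrite /phi1 /phi2 /g /p /c1 /c3 indicE.
  case: (boolP (t \in Pset)) => /= hP.
    have : K2 t <= K1 t by move: hP => /set_mem [].
    move=> h; rewrite max_l // min_r //; ring.
  have h : K1 t < K2 t.
    rewrite ltNge; apply/negP => h; move: hP; rewrite mem_set //.
  rewrite max_r ?min_l ?ltW //; ring.
have mD := @mD0 R.
have i1 := intgZ l1 mD0 (intg_ind mA (hc1 hK1 hK2)).
have i3 := intgZ l1 mD0 (intg_ind mC (hc3 hK1 hK2)).
have i2 := intgZ (l2 - l1) mD0 (intg_ind mB hK2).
have gi : intg D0 g by exact: (intgD mD0 (intgD mD0 i1 i3) i2).
have gE : RI D0 g = l1 * RI A (c1 K1 K2) + l1 * RI C (c3 K1 K2) + (l2 - l1) * RI B K2.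
  rewrite /RI /g RintegralD //; last exact: (intgD mD0 i1 i3).
  rewrite RintegralD // !RintegralZl //; [|exact: intg_ind mB hK2|exact: intg_ind mC (hc3 hK1 hK2)|exact: intg_ind mA (hc1 hK1 hK2)].
  by rewrite -!/(RI _ _) !RI_ind.
have mP := mPset.
apply: ereal_sup_ubound; exists phi1, phi2; split.
- split.
  + rewrite /phi1 /p; mtac.
  + rewrite /phi2 /p; mtac.
  + move=> t t0; rewrite /phi1 /phi2 /p.
    by case: (ind_cases Pset t) => ->; case: (ind_cases A t) => ->;
      case: (ind_cases B t) => ->; case: (ind_cases C t) => ->; rewrite ?(mul0r, mul1r, mulr0, mulr1, subr0, subrr, addr0, add0r); split; apply/andP; split; lra.
  + move=> s t s0 st.
    have e u : phi1 u + phi2 u = l1 * \1_A u + l1 * \1_C u + (l2 - l1) * \1_B u.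
      by rewrite /phi1 /phi2; ring.
    rewrite !e; have := ind_mono a st; have := ind_mono b st; have := ind_mono c st.
    rewrite -/A -/B -/C => h1 h2 h3.
    have l10 : 0 <= l1 := ltW hl1.
    have L0 : 0 <= l2 - l1 by rewrite subr_ge0.
    by rewrite !lerD // ler_wpM2l.
- rewrite /Jfun -gE -RIE //; by apply: eq_integral => t /set_mem t0; rewrite phig.
Qed.

End P2.


Lemma count_approx {R : realType} (h y : R) (N : nat) : 0 <= h -> 0 <= y ->
  let S := (\sum_(k < N) (((k%:R : R) * h < y)%R%:R : R))%R in
  ((y <= S * h) \/ (N%:R * h <= S * h)) /\ S * h <= y + h /\ S * h <= N%:R * h.
Proof.
move=> h0 y0; elim: N => [|N [IHl [IHu1 IHu2]]] /=.
  by rewrite big_ord0 !mul0r; split; [right|split; lra].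
rewrite big_ord_recr /=.
set S := \sum_(i < N) _ in IHl IHu1 IHu2 *.
have hN : (N.+1)%:R * h = N%:R * h + h by rewrite -addn1 natrD mulrDl mul1r.
rewrite hN.
case hy: (N%:R * h < y)%R => /=; rewrite mulrDl ?mul1r ?mul0r.
  split; first by case: IHl => H; [left|right]; lra.
  by split; lra.
move/negbT: hy; rewrite -leNgt => hy.
rewrite addr0; split; first by case: IHl => H; [left|left]; lra.
by split; lra.
Qed.

Lemma pw {R : realType} (l1 l2 k1 k2 x1 x2 : R) : 0 < l1 -> l1 <= l2 ->
  0 <= x1 <= l1 -> 0 <= x2 <= l2 ->
  x1 * k1 + x2 * k2 <= Num.max k1 k2 * Num.min (x1 + x2) l1
     + k2 * Num.min (Num.max (x1 + x2 - l1) 0) (l2 - l1)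
     + Num.min k1 k2 * Num.max (x1 + x2 - l2) 0.
Proof.
move=> hl1 hl12 /andP[x10 x11] /andP[x20 x21].
set s := x1 + x2.
have [hs1|hs1] := leP s l1.
  rewrite (max_r (_ : s - l1 <= 0)); last by lra.
  rewrite (max_r (_ : s - l2 <= 0)); last by lra.
  rewrite min_l; last by lra.
  have [hk|hk] := leP k1 k2.
    rewrite /s; nra.
  rewrite /s; nra.
have [hs2|hs2] := leP s l2.
  rewrite (max_l (_ : 0 <= s - l1)); last by lra.
  rewrite (max_r (_ : s - l2 <= 0)); last by lra.
  rewrite min_l; last by lra.
  have [hk|hk] := leP k1 k2.
    rewrite /s; nra.
  rewrite /s; nra.
rewrite (max_l (_ : 0 <= s - l1)); last by lra.
rewrite (max_l (_ : 0 <= s - l2)); last by lra.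
rewrite min_r; last by lra.
have [hk|hk] := leP k1 k2.
  rewrite /s; nra.
rewrite /s; nra.
Qed.

Section RIsum.
Context {R : realType}.
Local Notation mu := (@lebesgue_measure R).
Local Notation D0 := (@Rnonneg R).
Local Notation mR := (measurableTypeR R).

Lemma RI_sum (D : set R) (n : nat) (F : nat -> R -> R) : measurable (D : set mR) ->
  (forall k, intg D (F k)) ->
  intg D (fun t => \sum_(k < n) F k t) /\
  RI D (fun t => \sum_(k < n) F k t) = \sum_(k < n) RI D (F k).
Proof.
move=> mD Fi; elim: n => [|n [IHi IHe]].
  split.
    have := @integrable0 _ _ _ mu D.
    by apply: (eq_integrable mD) => t _ /=; rewrite big_ord0.
  rewrite big_ord0 /RI (@eq_Rintegral _ _ _ mu D (fun=> 0)); last by move=> t _; rewrite big_ord0.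
  by rewrite Rintegral_cst // mul0r.
have e : (fun t => \sum_(k < n.+1) F k t) = (fun t => \sum_(k < n) F k t + F n t).
  by apply/funext => t; rewrite big_ord_recr.
rewrite e big_ord_recr /=; split; first exact: (intgD mD IHi (Fi n)).
rewrite /RI RintegralD //; last exact: Fi.
move: IHe; rewrite /RI => ->. by [].
Qed.

Variable (s : R -> R).
Hypothesis ms : measurable_fun (D0 : set mR) s.
Hypothesis s_mono : forall x y, 0 <= x -> x <= y -> s x <= s y.

Definition Uth (th : R) : set R := D0 `&` (s @^-1` `]th, +oo[%classic).
Definition xth (th : R) : \bar R := ereal_inf (EFin @` Uth th).

Lemma mUth th : measurable (Uth th : set mR).
Proof. by apply: ms; [exact: mD0|exact: measurable_itv]. Qed.

Lemma Uth_sub th : Uth th `<=` D0.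
Proof. by move=> t []. Qed.

Lemma in_Uth th t : Uth th t <-> 0 <= t /\ th < s t.
Proof. by rewrite /Uth /= in_itv /= andbT. Qed.

Lemma xth_ge0 th : (0 <= xth th)%E.
Proof.
apply: le_ereal_inf_tmp => _ [t [t0 _] <-]; by rewrite lee_fin.
Qed.

Lemma xth_le th th' : th <= th' -> (xth th <= xth th')%E.
Proof.
move=> hth; apply: le_ereal_inf_tmp => _ [t /in_Uth [t0 ht] <-].
apply: ereal_inf_lbound; exists t => //; apply/in_Uth; split => //.
exact: le_lt_trans hth ht.
Qed.

Lemma Uth_eitv th : Uth th `<=` eitv_inf (xth th) /\
  eitv_inf (xth th) `\` Uth th `<=` [set fine (xth th)].
Proof.
split.
  move=> t ht; rewrite /eitv_inf /=; apply: ereal_inf_lbound; by exists t.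
move=> t [ht hnot] /=.
have [lt|eq] := boolP (xth th < t%:E)%E.
  have [_ [u hu <-] ut] := ereal_inf_lt lt.
  exfalso; apply: hnot; move/in_Uth: hu => [u0 hu]; apply/in_Uth.
  rewrite lte_fin in ut; split; first exact: le_trans u0 (ltW ut).
  exact: lt_le_trans hu (s_mono u0 (ltW ut)).
have : xth th = t%:E.
  by apply/eqP; rewrite eq_le ht /=; rewrite -leNgt in eq.
by move=> ->.
Qed.

Lemma RI_Uth th f : intg D0 f -> RI (Uth th) f = RI (eitv_inf (xth th)) f.
Proof.
move=> fi.
have [UE EU] := Uth_eitv th.
have mE : measurable (eitv_inf (xth th) : set mR) by exact: meitv_inf.
have mU := mUth th.
have ED : eitv_inf (xth th) `<=` D0 by apply: eitv_inf_sub; exact: xth_ge0.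
have mN : measurable (eitv_inf (xth th) `\` Uth th : set mR) by exact: measurableD.
have fE : intg (eitv_inf (xth th)) f by exact: intgS mE ED fi mD0.
rewrite /RI /Rintegral (negligible_integral mN mE fE).
  by rewrite setDD setIidr.
apply: (subset_measure0 mN (measurable_set1 (fine (xth th))) EU).
exact: lebesgue_measure_set1.
Qed.

End RIsum.


Lemma cmul {R : realType} (c sg S h : R) : 0 <= h -> sg <= S * h <= sg + h ->
  c * sg <= c * (S * h) + h * `|c|.
Proof.
move=> h0 /andP[a b]; have [c0|c0] := leP 0 c.
  by rewrite ger0_norm //; nra.
by rewrite ltr0_norm //; nra.
Qed.

Lemma approx {R : realType} (n : nat) (h th0 sg st : R) : (0 < n)%N -> 0 <= h ->
  0 <= sg <= n%:R * h ->
  (0 < h -> forall k : nat, (k < n)%N -> (th0 + k%:R * h < st) = (k%:R * h < sg)) ->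
  sg <= (\sum_(k < n) ((th0 + k%:R * h < st)%R%:R : R)) * h <= sg + h.
Proof.
move=> n0 h0 /andP[sg0 sgn] heq; set S := \sum_(k < n) _.
have [hp|hz0] := ltP 0 h; last first.
  have h00 : h = 0 by apply/eqP; rewrite eq_le hz0 h0.
  have sgz : sg = 0 by apply/eqP; rewrite eq_le sg0 andbT; move: sgn; rewrite h00 mulr0.
  by rewrite h00 sgz !mulr0 addr0 lexx.
have -> : S = \sum_(k < n) ((k%:R * h < sg)%R%:R : R).
  by apply: eq_bigr => k _; rewrite heq.
have [[l|l] [u1 u2]] := count_approx n h0 sg0.
  by apply/andP; split.
by apply/andP; split; lra.
Qed.

Lemma khlt {R : realType} (n k : nat) (L : R) : (k < n)%N -> 0 < L ->
  k%:R * (L / n%:R) < L.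
Proof.
move=> kn L0.
have n0 : (0 < n%:R :> R) by rewrite ltr0n; exact: leq_ltn_trans kn.
rewrite mulrA ltr_pdivrMr // mulrC ltr_pM2l //.
by rewrite ltr_nat.
Qed.

Lemma nh {R : realType} (n : nat) (L : R) : (0 < n)%N -> n%:R * (L / n%:R) = L.
Proof.
move=> n0; have : (n%:R : R) != 0 by rewrite pnatr_eq0 -lt0n.
by move=> nz; rewrite mulrC divfK.
Qed.

Lemma khle {R : realType} (n k : nat) (L : R) : (k <= n)%N -> 0 <= L ->
  k%:R * (L / n%:R) <= L.
Proof.
move=> kn L0; case: n kn => [|n] kn.
  by rewrite invr0 !mulr0.
rewrite mulrA ler_pdivrMr ?ltr0n // mulrC ler_wpM2l //.
by rewrite ler_nat.
Qed.

Lemma sg_bounds {R : realType} (l1 l2 x : R) : 0 < l1 -> l1 <= l2 -> 0 <= x <= l1 + l2 ->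
  [/\ 0 <= Num.min x l1 <= l1, 0 <= Num.min (Num.max (x - l1) 0) (l2 - l1) <= l2 - l1
    & 0 <= Num.max (x - l2) 0 <= l1].
Proof.
move=> hl1 hl12 /andP[x0 x1].
split; apply/andP.
- by case: (leP x l1) => h; split; lra.
- by case: (leP (x - l1) 0) => h; [case: (leP 0 (l2 - l1))|case: (leP (x - l1) (l2 - l1))] => h'; split; lra.
- by case: (leP (x - l2) 0) => h; split; lra.
Qed.

Lemma sg_eq1 {R : realType} (l1 x q : R) : q < l1 -> (0 + q < x) = (q < Num.min x l1).
Proof. by move=> hq; rewrite add0r lt_min hq andbT. Qed.

Lemma sg_eq2 {R : realType} (l1 l2 x q : R) : 0 <= q -> q < l2 - l1 ->
  (l1 + q < x) = (q < Num.min (Num.max (x - l1) 0) (l2 - l1)).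
Proof.
move=> q0 hq; rewrite lt_min lt_max hq andbT.
have -> : (q < 0) = false by rewrite ltNge q0.
by rewrite orbF ltrBrDl.
Qed.

Lemma sg_eq3 {R : realType} (l2 x q : R) : 0 <= q ->
  (l2 + q < x) = (q < Num.max (x - l2) 0).
Proof.
move=> q0; rewrite lt_max.
have -> : (q < 0) = false by rewrite ltNge q0.
by rewrite orbF ltrBrDl.
Qed.


Ltac solve_int := repeat first [ exact: mD0 | apply: intgD | apply: intgZ
  | apply: intg_abs | apply: hc1 | apply: hc3 | assumption ].

Lemma intg_bddM {R : realType} (D : set R) (h f : R -> R) (M : R) :
  measurable (D : set (measurableTypeR R)) -> intg D f ->
  measurable_fun (D : set (measurableTypeR R)) h ->
  (forall t, D t -> `|h t| <= M) -> intg D (fun t => h t * f t).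
Proof.
move=> mD fi mh hM.
have bd : [bounded h x | x in D].
  exists M; split; first by rewrite num_real.
  move=> x xM y Dy; exact: le_trans (hM y Dy) (ltW xM).
have := integrableMl mD fi mh bd.
by apply: (eq_integrable mD) => t _ /=; rewrite -EFinM mulrC.
Qed.

Lemma indU {R : realType} (s : R -> R) (th t : R) : 0 <= t ->
  (\1_(Uth s th) t : R) = (th < s t)%R%:R.
Proof.
move=> t0; rewrite indicE.
have -> : (t \in Uth s th) = (th < s t)%R.
  by apply/idP/idP => [/set_mem /in_Uth [] //|h]; apply/mem_set/in_Uth; split.
by [].
Qed.

Lemma le_dir {R : realType} (l1 l2 : R) (K1 K2 : R -> R) (hl1 : 0 < l1) (hl12 : l1 <= l2)
  (hK1 : intg (@Rnonneg R) K1) (hK2 : intg (@Rnonneg R) K2) (phi1 phi2 : R -> R) :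
  admissible l1 l2 phi1 phi2 -> (Jfun K1 K2 phi1 phi2 <= Iabc_sup l1 l2 K1 K2)%E.
Proof.
move=> [m1 m2 hb hmono].
have mD := @mD0 R.
pose s t := phi1 t + phi2 t.
have ms : measurable_fun (@Rnonneg R : set (measurableTypeR R)) s.
  exact: measurable_realfun.measurable_funD.
have smono : forall x y, 0 <= x -> x <= y -> s x <= s y by exact: hmono.
have hbt t : 0 <= t -> [/\ 0 <= phi1 t, phi1 t <= l1, 0 <= phi2 t & phi2 t <= l2].
  by move=> t0; have [/andP[? ?] /andP[? ?]] := hb t t0.
pose g t := phi1 t * K1 t + phi2 t * K2 t.
have i1 : intg (@Rnonneg R) (fun t => phi1 t * K1 t).
  apply: (intg_bddM (M := l1)) => // t t0; have [? ? _ _] := hbt t t0.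
  by rewrite ger0_norm.
have i2 : intg (@Rnonneg R) (fun t => phi2 t * K2 t).
  apply: (intg_bddM (M := l2)) => // t t0; have [_ _ ? ?] := hbt t t0.
  by rewrite ger0_norm.
have gi : intg (@Rnonneg R) g by exact: (intgD mD i1 i2).
have JE : Jfun K1 K2 phi1 phi2 = (RI (@Rnonneg R) g)%:E by exact: RIE mD gi.
set M := Iabc_sup l1 l2 K1 K2.
have Mge : forall a b c, (0 <= a)%E -> (a <= b)%E -> (b <= c)%E ->
    (Iabc l1 l2 K1 K2 a b c <= M)%E.
  by move=> a b c ? ? ?; apply: ereal_sup_ubound; exists a, b, c; split.
rewrite JE; case EM: M => [m| |]; last first.
- exfalso; have := Mge 0%E 0%E 0%E (lexx _) (lexx _) (lexx _).
  by rewrite EM (Iabc_alt hK1 hK2) // leeNy_eq.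
- exact: leey.
rewrite lee_fin.
have mMm : forall a b c, (0 <= a)%E -> (a <= b)%E -> (b <= c)%E ->
    forall T : R, Iabc l1 l2 K1 K2 a b c = T%:E -> T <= m.
  by move=> a b c ha hb' hc T hT; rewrite -lee_fin -EM -hT; exact: Mge.
pose C := l1 * RI (@Rnonneg R) (fun t => `|c1 K1 K2 t|)
   + (l2 - l1) * RI (@Rnonneg R) (fun t => `|K2 t|)
   + l1 * RI (@Rnonneg R) (fun t => `|c3 K1 K2 t|).
have C0 : 0 <= C.
  have L0 : 0 <= l2 - l1 by rewrite subr_ge0.
  have P (f : R -> R) : 0 <= RI (@Rnonneg R) (fun t => `|f t|).
    by rewrite /RI; apply: Rintegral_ge0 => t _.
  have := P (c1 K1 K2); have := P K2; have := P (c3 K1 K2); rewrite /C; nra.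
have key : forall n : nat, (0 < n)%N -> RI (@Rnonneg R) g <= m + C / n%:R.
  move=> n n0.
  have n0R : (0 < n%:R :> R) by rewrite ltr0n.
  have L0 : 0 <= l2 - l1 by rewrite subr_ge0.
  pose h1 := l1 / n%:R; pose h2 := (l2 - l1) / n%:R.
  have h10 : 0 <= h1 by rewrite /h1 divr_ge0 // ltW.
  have h20 : 0 <= h2 by rewrite /h2 divr_ge0 // ltW.
  pose U (th : R) := Uth s th.
  have mU (th : R) : measurable (U th : set (measurableTypeR R)) by exact: mUth.
  pose G1 (t : R) := \sum_(k < n) \1_(U (0 + k%:R * h1)) t * c1 K1 K2 t.
  pose G2 (t : R) := \sum_(k < n) \1_(U (l1 + k%:R * h2)) t * K2 t.
  pose G3 (t : R) := \sum_(k < n) \1_(U (l2 + k%:R * h1)) t * c3 K1 K2 t.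
  have [iG1 eG1] := RI_sum n (F := fun (k : nat) (t : R) => \1_(U (0 + k%:R * h1)) t * c1 K1 K2 t) mD
    (fun k => intg_ind (mU _) (hc1 hK1 hK2)).
  have [iG2 eG2] := RI_sum n (F := fun (k : nat) (t : R) => \1_(U (l1 + k%:R * h2)) t * K2 t) mD
    (fun k => intg_ind (mU _) hK2).
  have [iG3 eG3] := RI_sum n (F := fun (k : nat) (t : R) => \1_(U (l2 + k%:R * h1)) t * c3 K1 K2 t) mD
    (fun k => intg_ind (mU _) (hc3 hK1 hK2)).
  pose F (t : R) := h1 * G1 t + h1 * `|c1 K1 K2 t| + h2 * G2 t + h2 * `|K2 t|
              + h1 * G3 t + h1 * `|c3 K1 K2 t|.
  have iF : intg (@Rnonneg R) F.
    exact: (intgD mD (intgD mD (intgD mD (intgD mD (intgD mD (intgZ h1 mD iG1)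
      (intgZ h1 mD (intg_abs (hc1 hK1 hK2)))) (intgZ h2 mD iG2))
      (intgZ h2 mD (intg_abs hK2))) (intgZ h1 mD iG3))
      (intgZ h1 mD (intg_abs (hc3 hK1 hK2)))).
  have eF : RI (@Rnonneg R) F = h1 * RI (@Rnonneg R) G1 + h1 * RI (@Rnonneg R) (fun t => `|c1 K1 K2 t|)
     + h2 * RI (@Rnonneg R) G2 + h2 * RI (@Rnonneg R) (fun t => `|K2 t|)
     + h1 * RI (@Rnonneg R) G3 + h1 * RI (@Rnonneg R) (fun t => `|c3 K1 K2 t|).
    rewrite /RI /F !RintegralD //; try solve_int.
    by rewrite !RintegralZl //; solve_int.
  have sG1 : RI (@Rnonneg R) G1 = \sum_(k < n) RI (U (0 + k%:R * h1)) (c1 K1 K2).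
    have -> : RI (@Rnonneg R) G1 = \sum_(k < n)
        RI (@Rnonneg R) (fun t => \1_(U (0 + k%:R * h1)) t * c1 K1 K2 t) by exact: eG1.
    by apply: eq_bigr => k _; rewrite RI_ind //; exact: Uth_sub.
  have sG2 : RI (@Rnonneg R) G2 = \sum_(k < n) RI (U (l1 + k%:R * h2)) K2.
    have -> : RI (@Rnonneg R) G2 = \sum_(k < n)
        RI (@Rnonneg R) (fun t => \1_(U (l1 + k%:R * h2)) t * K2 t) by exact: eG2.
    by apply: eq_bigr => k _; rewrite RI_ind //; exact: Uth_sub.
  have sG3 : RI (@Rnonneg R) G3 = \sum_(k < n) RI (U (l2 + k%:R * h1)) (c3 K1 K2).
    have -> : RI (@Rnonneg R) G3 = \sum_(k < n)
        RI (@Rnonneg R) (fun t => \1_(U (l2 + k%:R * h1)) t * c3 K1 K2 t) by exact: eG3.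
    by apply: eq_bigr => k _; rewrite RI_ind //; exact: Uth_sub.
  pose T (k : 'I_n) := l1 * RI (U (0 + k%:R * h1)) (c1 K1 K2)
     + l1 * RI (U (l2 + k%:R * h1)) (c3 K1 K2) + (l2 - l1) * RI (U (l1 + k%:R * h2)) K2.
  have hT : forall k : 'I_n, T k <= m.
    move=> k.
    have kn : (k <= n)%N by exact: ltnW.
    have k1 := khle kn (ltW hl1); have k2 := khle kn L0.
    have kh1 : 0 <= k%:R * h1 by rewrite mulr_ge0.
    have kh2 : 0 <= k%:R * h2 by rewrite mulr_ge0.
    have le12 : 0 + k%:R * h1 <= l1 + k%:R * h2 by rewrite /h1; lra.
    have le23 : l1 + k%:R * h2 <= l2 + k%:R * h1 by rewrite /h2; lra.
    apply: (mMm _ _ _ (xth_ge0 s _) (xth_le s le12) (xth_le s le23)).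
    rewrite (Iabc_alt hK1 hK2) ?xth_ge0 //; last exact: le_trans (xth_le s le12) (xth_le s le23).
    by rewrite /T /U !(RI_Uth ms smono) //; [exact: hc3|exact: hc1].
  have L2p : 0 < h2 -> 0 < l2 - l1.
    by move=> hp; rewrite -(nh (l2 - l1) n0) mulr_gt0.
  have pwF : forall t, (@Rnonneg R) t -> g t <= F t.
    move=> t t0; have t0' : 0 <= t := t0.
    have [p10 p11 p20 p21] := hbt t t0'.
    have hpw := @pw R l1 l2 (K1 t) (K2 t) (phi1 t) (phi2 t) hl1 hl12.
    rewrite p10 p11 p20 p21 /= in hpw; have {}hpw := hpw isT isT.
    have sb : 0 <= phi1 t + phi2 t <= l1 + l2 by apply/andP; split; lra.
    have [B1 B2 B3] := sg_bounds hl1 hl12 sb.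
    have a1 := @approx R n h1 0 (Num.min (phi1 t + phi2 t) l1) (s t) n0 h10.
    rewrite nh // in a1; have {}a1 := a1 B1.
    have {}a1 : _ := a1 (fun hp k kn => sg_eq1 _ (khlt kn hl1)).
    have a2 := @approx R n h2 l1 (Num.min (Num.max (phi1 t + phi2 t - l1) 0) (l2 - l1)) (s t) n0 h20.
    rewrite nh // in a2; have {}a2 := a2 B2.
    have {}a2 : _ := a2 (fun hp k kn => sg_eq2 _ (mulr_ge0 (ler0n _ _) h20) (khlt kn (L2p hp))).
    have a3 := @approx R n h1 l2 (Num.max (phi1 t + phi2 t - l2) 0) (s t) n0 h10.
    rewrite nh // in a3; have {}a3 := a3 B3.
    have {}a3 : _ := a3 (fun hp k kn => sg_eq3 _ _ (mulr_ge0 (ler0n _ _) h10)).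
    have c1' := cmul (c1 K1 K2 t) h10 a1.
    have c2' := cmul (K2 t) h20 a2.
    have c3' := cmul (c3 K1 K2 t) h10 a3.
    have eqG1 : h1 * G1 t = c1 K1 K2 t * ((\sum_(k < n) ((0 + k%:R * h1 < s t)%R%:R : R)) * h1).
      rewrite /G1 -mulr_suml.
      under eq_bigr => k _ do rewrite (indU _ _ t0').
      rewrite mulrA mulrC; congr (_ * _); exact: mulrC.
    have eqG2 : h2 * G2 t = K2 t * ((\sum_(k < n) ((l1 + k%:R * h2 < s t)%R%:R : R)) * h2).
      rewrite /G2 -mulr_suml.
      under eq_bigr => k _ do rewrite (indU _ _ t0').
      rewrite mulrA mulrC; congr (_ * _); exact: mulrC.
    have eqG3 : h1 * G3 t = c3 K1 K2 t * ((\sum_(k < n) ((l2 + k%:R * h1 < s t)%R%:R : R)) * h1).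
      rewrite /G3 -mulr_suml.
      under eq_bigr => k _ do rewrite (indU _ _ t0').
      rewrite mulrA mulrC; congr (_ * _); exact: mulrC.
    rewrite -/(c1 K1 K2 t) -/(c3 K1 K2 t) in hpw.
    rewrite /g /F eqG1 eqG2 eqG3.
    lra.
  have hgF : RI (@Rnonneg R) g <= RI (@Rnonneg R) F by exact: le_Rintegral mD gi iF pwF.
  have XE : \sum_(k < n) T k = l1 * (\sum_(k < n) RI (U (0 + k%:R * h1)) (c1 K1 K2))
     + l1 * (\sum_(k < n) RI (U (l2 + k%:R * h1)) (c3 K1 K2))
     + (l2 - l1) * (\sum_(k < n) RI (U (l1 + k%:R * h2)) K2).
    by rewrite /T !big_split /= -!mulr_sumr.
  have hX : \sum_(k < n) T k <= m * n%:R.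
    apply: le_trans (ler_sum _ (fun k _ => hT k)) _.
    by rewrite sumr_const card_ord mulr_natr.
  have hX' : (\sum_(k < n) T k) / n%:R <= m by rewrite ler_pdivrMr.
  have eF' : RI (@Rnonneg R) F = (\sum_(k < n) T k) / n%:R + C / n%:R.
    rewrite eF sG1 sG2 sG3 XE /C /h1 /h2; ring.
  lra.
have [d0|] := leP (RI (@Rnonneg R) g) m; first by [].
move=> mg; exfalso.
pose d := RI (@Rnonneg R) g - m.
have dp : 0 < d by rewrite /d subr_gt0.
pose n := (Num.truncn (C / d)).+1.
have hn : C / d < n%:R by exact: truncnS_gt.
have n0 : (0 < n%:R :> R) by rewrite ltr0n.
have hCn : C / n%:R < d.
  by rewrite ltr_pdivrMr // mulrC -ltr_pdivrMr.
have := key n isT; rewrite /d in hCn; lra.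
Qed.

End Aux.
Import Aux.

Theorem proposition3 (R : realType) (l1 l2 : R) (K1 K2 : R -> R)
  (hl1 : 0 < l1) (hl12 : l1 <= l2) (hl2 : l2 <= 1)
  (hK1 : lebesgue_measure.-integrable (@Rnonneg R) (EFin \o K1))
  (hK2 : lebesgue_measure.-integrable (@Rnonneg R) (EFin \o K2)) :
  Isup l1 l2 K1 K2 = Iabc_sup l1 l2 K1 K2.
Proof.
apply/eqP; rewrite eq_le; apply/andP; split.
- apply: ge_ereal_sup => _ [phi1 [phi2 [adm ->]]].
  exact: (le_dir hl1 hl12 hK1 hK2 adm).
- apply: ge_ereal_sup => _ [a [b [c [a0 ab bc ->]]]].
  exact: (ge_dir hK1 hK2 hl1 hl12 a0 ab bc).
Qed.
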